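(* Let $G\subset\mathbb{R}^n$ be a compact set of positive Lebesgue measure with empty interior, and let $w_G(x)=1$ for $x\in G$ and $w_G(x)=2$ for $x\in\mathbb{R}^n\setminus G$. Then the Banach function space $L^\infty(\mathbb{R}^n,w_G)$ does not satisfy the bounded $L^2$-approximation property.
   Context: $L^\infty(\mathbb{R}^n,w)$ is the space of measurable $f$ with $\|f\|_{L^\infty(\mathbb{R}^n,w)}:=\|fw\|_{L^\infty(\mathbb{R}^n)}<\infty$. A Banach function space $X$ of functions on $\mathbb{R}^n$ has the bounded $L^2$-approximation property if for every $u\in L^2(\mathbb{R}^n)\cap X$ there is a sequence $u_j\in C_0^\infty(\mathbb{R}^n)$ with $\|u-u_j\|_{L^2(\mathbb{R}^n)}\to0$ and $\limsup_j\|u_j\|_X\le\|u\|_X$. *)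

(* Defs.v *)
From HB Require Import structures.
From mathcomp Require Import all_boot all_order all_algebra.
From mathcomp Require Import all_classical all_reals all_analysis.
Set Implicit Arguments. Unset Strict Implicit. Unset Printing Implicit Defensive.
Import Order.TTheory GRing.Theory Num.Theory.
Import numFieldNormedType.Exports.
Local Open Scope classical_set_scope.
Local Open Scope ring_scope.

(* R^n is modelled by row vectors 'rV[R]_n (normed space, sup norm). *)

Section Rn.
Context {R : realType}.

(* Lebesgue integral of a nonnegative (Borel) function on R^n, computed as the
   iterated one-dimensional Lebesgue integral (Tonelli):
   int_{R^{n+1}} f = int_R dx  int_{R^n} f(x, v) dv. *)
Fixpoint lint (n : nat) : ('rV[R]_n -> \bar R) -> \bar R :=
  match n with
  | 0 => fun f => f 0
  | n'.+1 => fun f =>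
      (\int[@lebesgue_measure R]_x lint (fun v : 'rV[R]_n' =>
            f (row_mx (const_mx x : 'rV[R]_1) v)))%E
  end.

Definition lmeas (n : nat) (A : set 'rV[R]_n) : \bar R :=
  lint (fun x => (\1_A x)%:E).

Definition borel_fun (n : nat) (f : 'rV[R]_n -> R) : Prop :=
  forall B : set R, measurable B ->
    <<s [set U : set 'rV[R]_n | open U] >> (f @^-1` B).

Definition L2norm (n : nat) (f : 'rV[R]_n -> R) : \bar R :=
  poweR (lint (fun x => (`|f x| ^+ 2)%:E)) 2^-1.

Definition inL2 (n : nat) (f : 'rV[R]_n -> R) : Prop :=
  borel_fun f /\ (L2norm f < +oo)%E.

Definition esssup (n : nat) (g : 'rV[R]_n -> R) : \bar R :=
  ereal_inf [set t%:E | t in [set t : R | lmeas [set x | t < `|g x|] = 0%E]].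

Definition Linf_w_norm (n : nat) (w : 'rV[R]_n -> R) (f : 'rV[R]_n -> R) :=
  esssup (fun x => f x * w x).

Definition inLinf_w (n : nat) (w : 'rV[R]_n -> R) (f : 'rV[R]_n -> R) : Prop :=
  borel_fun f /\ (Linf_w_norm w f < +oo)%E.

Fixpoint Ck (n : nat) (k : nat) (f : 'rV[R]_n -> R) : Prop :=
  match k with
  | 0 => continuous f
  | k'.+1 => (forall x, differentiable f x) /\
             (forall v : 'rV[R]_n, Ck k' (fun x => 'D_v f x))
  end.

Definition C0inf (n : nat) (f : 'rV[R]_n -> R) : Prop :=
  (forall k, Ck k f) /\
  exists K : set 'rV[R]_n, compact K /\ forall x, ~ K x -> f x = 0.

Definition bounded_L2_approx (n : nat) (inX : ('rV[R]_n -> R) -> Prop)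
    (normX : ('rV[R]_n -> R) -> \bar R) : Prop :=
  forall u, inL2 u -> inX u ->
    exists uj : nat -> 'rV[R]_n -> R,
      (forall j, C0inf (uj j)) /\
      ((fun j => L2norm (u \- uj j)) @ \oo --> 0%E) /\
      (limn_esup (fun j => normX (uj j)) <= normX u)%E.

Definition wG (n : nat) (G : set 'rV[R]_n) (x : 'rV[R]_n) : R :=
  if x \in G then 1 else 2.

End Rn.

(* Main.v *)
Require Import Defs.
From HB Require Import structures.
From mathcomp Require Import all_boot all_order all_algebra.
From mathcomp Require Import all_classical all_reals all_analysis.
From mathcomp Require Import measurable_realfun.
From mathcomp Require Import lra.
Import Order.TTheory GRing.Theory Num.Theory.
Import numFieldNormedType.Exports.
Local Open Scope classical_set_scope.
Local Open Scope ring_scope.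

Section S.
Context {R : realType}.
Local Open Scope ereal_scope.

Lemma int_mono d (T : measurableType d) (mu : {measure set T -> \bar R}) (f g : T -> \bar R) :
  (forall x, 0 <= f x) -> (forall x, f x <= g x) -> \int[mu]_x f x <= \int[mu]_x g x.
Proof.
move=> f0 fg; have g0 x : 0 <= g x := le_trans (f0 x) (fg x).
rewrite !ge0_integralTE//; apply: le_ereal_sup => _ [h hf <-]; exists h => //= x.
exact: le_trans (hf x) (fg x).
Qed.

Lemma lint_ge0 n (f : 'rV[R]_n -> \bar R) : (forall x, 0 <= f x) -> 0 <= lint f.
Proof.
elim: n f => [|n IH] f f0 /=; first exact: f0.
by apply: integral_ge0 => x _; apply: IH.
Qed.

Lemma lint_mono n (f g : 'rV[R]_n -> \bar R) :
  (forall x, 0 <= f x) -> (forall x, f x <= g x) -> lint f <= lint g.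
Proof.
elim: n f g => [|n IH] f g f0 fg /=; first exact: fg.
apply: int_mono => x; first by apply: lint_ge0.
by apply: IH.
Qed.

Lemma lint0 n : lint (fun _ : 'rV[R]_n => 0) = 0.
Proof.
elim: n => [|n IH] //=.
have -> : (fun x : R => lint (fun _ : 'rV[R]_n => 0)) = cst 0 by apply/funext=> x; rewrite IH.
exact: integral0.
Qed.

Local Open Scope ring_scope.

Definition box {n} (c : 'rV[R]_n) (r : R) : set 'rV[R]_n :=
  [set y | forall j, `|c 0 j - y 0 j| < r].

Lemma box_row n (c : 'rV[R]_(1 + n)) r a v :
  box c r (row_mx (const_mx a : 'rV_1) v) <->
  ball (c 0 0) r a /\ box (rsubmx c) r v.
Proof.
have l0 : lshift n (0 : 'I_1) = 0 :> 'I_(1 + n) by apply/val_inj.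
rewrite /box /=; split.
  move=> H; split.
    by have := H (lshift n 0); rewrite row_mxEl !mxE l0.
  by move=> j; have := H (rshift 1 j); rewrite row_mxEr !mxE.
move=> [hb hr] j; case: (split_ordP j) => j0 ->.
  by rewrite row_mxEl !mxE (ord1 j0) l0.
by rewrite row_mxEr; have := hr j0; rewrite !mxE.
Qed.

Lemma lint_box n (c : 'rV[R]_n) r k : 0 < r -> 0 <= k ->
  lint (fun x => (k * \1_(box c r) x)%:E) = (k * (2 * r) ^+ n)%:E.
Proof.
move=> r0 k0; elim: n c => [|n IH] c /=.
  by rewrite indicE mem_set ?expr0// => -[].
have inner : forall a : R, lint (fun v : 'rV[R]_n =>
      (k * \1_(box c r) (row_mx (const_mx a : 'rV_1) v))%:E) =
    ((\1_(ball (c 0 0) r) a)%:E * (k * (2 * r) ^+ n)%:E)%E.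
  move=> a; have [ha|ha] := pselect (ball (c 0 0) r a).
    rewrite indicE mem_set// mul1e -(IH (rsubmx (c : 'rV_(1 + n)))).
    congr lint; apply/funext => v; congr (_ * _)%:E.
    rewrite !indicE; have [hv|hv] := pselect (box (rsubmx (c : 'rV_(1 + n))) r v).
      rewrite (mem_set hv) mem_set//.
      have := proj2 (@box_row n c r a v) (conj ha hv). exact.
    rewrite !memNset// => /(proj1 (@box_row n c r a v)) [].
    by [].
  rewrite indicE memNset// mul0e -(lint0 n); congr lint; apply/funext => v.
  rewrite indicE memNset ?mulr0// => /(proj1 (@box_row n c r a v)) [].
  by [].
rewrite (_ : (fun x : R => _) = fun a : R => ((\1_(ball (c 0 0) r) a)%:E * (k * (2 * r) ^+ n)%:E)%E); last first.
  by apply/funext => a; rewrite -inner.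
have mB : measurable (ball (c 0 0) r : set R) by rewrite ball_itv; exact: measurable_itv.
rewrite ge0_integralZr//.
- rewrite integral_indic// setIT ball_itv.
  rewrite [X in (X * _)%E = _](_ : _ = (2 * r)%:E).
    by rewrite -EFinM exprS mulrCA.
  apply: eq_trans (lebesgue_measure_itv (`](c 0 0 - r), (c 0 0 + r)[ : interval R)) _.
  rewrite /= lte_fin ltrBlDr -addrA ltrDl addr_gt0//.
  by rewrite -EFinD; congr EFin; rewrite opprB addrC addrA subrK [RHS]mulr_natl mulr2n.
- apply: measurableT_comp => //; exact: measurable_indic.
- have h : (0 <= k * (2 * r) ^+ n)%R by rewrite mulr_ge0// exprn_ge0// mulr_ge0// ltW.
  exact: h.
Qed.


Lemma box_ball n (c : 'rV[R]_n) r : 0 < r -> box c r `<=` ball c r.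
Proof.
move=> r0 y hy; rewrite /ball /=; split => // i j.
by rewrite (ord1 i); exact: hy.
Qed.

Lemma ball_box n (c : 'rV[R]_n) r : ball c r `<=` box c r.
Proof. by move=> y [_ h] j; exact: h 0 j. Qed.

Lemma lmeas_set0 n : lmeas (set0 : set 'rV[R]_n) = 0%E.
Proof.
rewrite /lmeas -(lint0 n); congr lint; apply/funext => x.
by rewrite indicE memNset.
Qed.

Lemma lmeas_box_gt0 n (c : 'rV[R]_n) r (S : set 'rV[R]_n) : 0 < r -> box c r `<=` S -> (0 < lmeas S)%E.
Proof.
move=> r0 bS; apply: (@lt_le_trans _ _ (lint (fun x => (1 * \1_(box c r) x)%:E))).
  by rewrite lint_box// ?lte_fin mul1r exprn_gt0// mulr_gt0.
apply: lint_mono => x; first by rewrite lee_fin mul1r.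
rewrite mul1r lee_fin !indicE; have [h|h] := pselect (box c r x).
  by rewrite !mem_set//; exact: bS.
by rewrite memNset.
Qed.

End S.

Theorem theorem2p6 (R : realType) (n : nat) (G : set 'rV[R]_n) :
  compact G -> (0 < lmeas G)%E -> interior G = set0 ->
  ~ bounded_L2_approx (inLinf_w (wG G)) (Linf_w_norm (wG G)).
Proof.
move=> cG mG iG H.
have clG : closed G := compact_closed (@norm_hausdorff _ _) cG.
pose u : 'rV[R]_n -> R := fun x => 4 * \1_G x.
have [M [M0 GM]] : exists M : R, 0 < M /\ G `<=` box 0 M.
  case: (compact_bounded cG) => M0 [_ hM].
  exists (`|M0| + 2); split; first by rewrite ltr_wpDl.
  move=> y Gy; apply: ball_box; rewrite -ball_normE /ball_ /= sub0r normrN.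
  apply: (@le_lt_trans _ _ (`|M0| + 1)); last by rewrite ltrD2l ltr1n.
  apply: hM => //; apply: (@le_lt_trans _ _ `|M0|); first exact: ler_norm.
  by rewrite ltrDl.
have LGfin : (lmeas G < +oo)%E.
  apply: (@le_lt_trans _ _ (lint (fun x => (1 * \1_(box 0 M) x)%:E))).
    apply: lint_mono => x; first by rewrite lee_fin.
    rewrite mul1r lee_fin !indicE; have [h|h] := pselect (G x).
      by rewrite !mem_set//; exact: GM.
    by rewrite memNset.
  by rewrite lint_box// ltry.
have uG x : G x -> u x = 4 by move=> Gx; rewrite /u indicE mem_set// mulr1.
have uNG x : ~ G x -> u x = 0 by move=> Gx; rewrite /u indicE memNset// mulr0.
have oG : open (~` G) by exact: closed_openC.
have sG : <<s [set U : set 'rV[R]_n | open U] >> (~` G) by exact: sub_sigma_algebra.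
have sC : forall A, <<s [set U : set 'rV[R]_n | open U] >> A ->
    <<s [set U : set 'rV[R]_n | open U] >> (~` A).
  by move=> A hA; rewrite -setTD; exact: sigma_algebraCD.
have bu : borel_fun u.
  move=> B _.
  have [B4|B4] := pselect (B 4); have [B0|B0] := pselect (B 0).
  - have -> : u @^-1` B = setT.
      apply/seteqP; split => x // _; change (B (u x)).
      by have [Gx|Gx] := pselect (G x); [rewrite uG|rewrite uNG].
    by have := sC _ (@sigma_algebra0 _ setT [set U : set 'rV[R]_n | open U]); rewrite setC0.
  - have -> : u @^-1` B = ~` ~` G.
      rewrite setCK; apply/seteqP; split => x hx; [change (B (u x)) in hx|change (B (u x))].
        by have [Gx|Gx] := pselect (G x) => //; rewrite uNG in hx.
      by rewrite uG.
    exact: (sC _ sG).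
  - have -> : u @^-1` B = ~` G; last exact: sG.
    apply/seteqP; split => x hx; [change (B (u x)) in hx|change (B (u x))].
      by have [Gx|Gx] := pselect (G x) => //; rewrite uG in hx.
    by rewrite uNG.
  - have -> : u @^-1` B = set0; last exact: sigma_algebra0.
    apply/seteqP; split => x hx //; change (B (u x)) in hx.
    by have [Gx|Gx] := pselect (G x); [rewrite uG in hx|rewrite uNG in hx].
have wGG x : G x -> wG G x = 1 by move=> Gx; rewrite /wG mem_set.
have wGN x : ~ G x -> wG G x = 2 by move=> Gx; rewrite /wG memNset.
have u2 : inL2 u.
  split => //; apply: poweR_lty.
  apply: (@le_lt_trans _ _ (lint (fun x => (16 * \1_(box 0 M) x)%:E))); last first.
    by rewrite lint_box// ltry.
  apply: lint_mono => x; first by rewrite lee_fin.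
  rewrite lee_fin indicE; have [Gx|Gx] := pselect (G x).
    rewrite uG// mem_set; last exact: GM.
    by rewrite mulr1 ger0_norm // -natrX.
  by rewrite uNG// normr0 expr0n /= mulr_ge0.
have nu4 : (Linf_w_norm (wG G) u <= 4%:E)%E.
  apply: ereal_inf_lbound; exists 4 => //.
  rewrite -(lmeas_set0 n); congr lmeas; apply/seteqP; split => x //=.
  have [Gx|Gx] := pselect (G x).
    by rewrite uG// wGG// mulr1 ger0_norm ?ltxx.
  by rewrite uNG// mul0r normr0 ltNge ler0n.
have [uj [Cuj [conv lsup]]] := H u u2 (conj bu (le_lt_trans nu4 (ltry _))).
have [N1 HN1] : exists N, forall j, (N <= j)%N -> (Linf_w_norm (wG G) (uj j) < 5%:E)%E.
  set f := fun j => Linf_w_norm (wG G) (uj j).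
  have hl := le_trans lsup nu4; rewrite limn_esup_lim in hl.
  rewrite (cvg_lim (@ereal_hausdorff R) (cvg_esups_inf (u:=f))) in hl.
  have [_ [N _ <-] hN] : exists2 y, range (esups f) y & (y < 5%:E)%E.
    by apply: ereal_inf_lt; apply: le_lt_trans hl _; rewrite lte_fin; lra.
  exists N => j Nj; apply: le_lt_trans hN.
  by apply: ereal_sup_ubound; exists j.
have LGpos : (0 < fine (lmeas G))%R.
  by apply: fine_gt0; rewrite mG LGfin.
pose e := (fine (lmeas G)) `^ 2^-1.
have e0 : (0 < e)%R by exact: powR_gt0.
have [N2 HN2] : exists N, forall j, (N <= j)%N -> (L2norm (u \- uj j)%R < e%:E)%E.
  have [hfin /cvgr_dist_lt h] := (fine_cvgP _ 0%R).1 conv.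
  have [N _ hN] := filterI hfin (h e e0).
  exists N => j Nj; have [fj dj] := hN j Nj.
  rewrite -(fineK fj) lte_fin; apply: le_lt_trans dj.
  by rewrite sub0r normrN ler_norm.
pose j := maxn N1 N2.
have nj := HN1 j (leq_maxl _ _).
have lj := HN2 j (leq_maxr _ _).
have bnd : forall x, (`|uj j x| <= 5 / 2)%R.
  move=> x; rewrite leNgt; apply/negP => hx.
  have cj : continuous (uj j) := (Cuj j).1 0%N.
  have Vn : forall y, (5/2 < `|uj j y|)%R -> nbhs y [set z | (5/2 < `|uj j z|)%R].
    move=> y hy.
    have h0 : (0 < `|uj j y| - 5/2)%R by rewrite subr_gt0.
    have := cvgr_dist_lt _ _ (cj y) _ h0.
    move=> /(_ (nbhs_filter y)) hn; apply: (filterS _ hn) => z /= hz.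
    have : (`|uj j y| <= `|uj j y - uj j z| + `|uj j z|)%R.
      by rewrite -[X in `|X| <= _](subrK (uj j z)) ler_normD.
    lra.
  have [y0 [Vy0 Gy0]] : exists y, (5/2 < `|uj j y|)%R /\ ~ G y.
    apply: contrapT => hne.
    have : interior G x.
      apply: filterS (Vn x hx) => z hz; apply: contrapT => Gz; apply: hne; by exists z.
    by rewrite iG.
  have hW : nbhs y0 ([set z | (5/2 < `|uj j z|)%R] `&` ~` G).
    apply: filterI; first exact: Vn.
    by apply: open_nbhs_nbhs; split.
  have [r r0 hr] := (nbhs_ballP _ _).1 hW.
  have : (5%:E <= Linf_w_norm (wG G) (uj j))%E.
    rewrite /Linf_w_norm /esssup; apply/ereal_infP => _ [t ht <-].
    rewrite lee_fin leNgt; apply/negP => t5.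
    have : (0 < lmeas [set x | (t < `|uj j x * wG G x|)%R])%E.
      apply: (@lmeas_box_gt0 _ _ y0 r) => // z /(@box_ball _ n y0 r r0) /hr [hz Gz] /=.
      rewrite wGN// normrM (@ger0_norm _ 2)//; move: hz => /=; lra.
    by rewrite ht ltxx.
  by rewrite leNgt nj.
have : (e%:E <= L2norm (u \- uj j)%R)%E.
  have LGE : lmeas G = (fine (lmeas G))%:E.
    by rewrite fineK// ge0_fin_numE// ltW.
  rewrite /e -poweR_EFin -LGE /L2norm.
  apply: gt0_ler_poweR.
  - by rewrite invr_ge0.
  - by rewrite in_itv /= leey andbT ltW.
  - by rewrite in_itv /= leey andbT; apply: lint_ge0 => x; rewrite lee_fin.
  apply: lint_mono => x; first by rewrite lee_fin.
  rewrite lee_fin indicE; have [Gx|Gx] := pselect (G x); last first.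
    by rewrite memNset // sqr_ge0.
  rewrite mem_set// /= uG//.
  have h1 : (1 <= `|4 - uj j x|)%R.
    have := bnd x; rewrite ler_norml => /andP [h1 h2].
    apply: le_trans (ler_norm _); lra.
  by rewrite exprn_ege1.
by rewrite leNgt lj.
Qed.
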